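(* Let $n\geq2$ and $d\geq0$. Any solution $u:(d,\infty)\to\mathbb{R}^+$ of $$u''(x)=\Big[\frac{xu'(x)-u(x)}{2}+\frac{n-1}{u(x)}\Big]\big(1+(u'(x))^2\big)$$ satisfies, for some constant $\sigma=\sigma(u)\geq0$, the identity $$u(x)=2(n-1)x\int_x^\infty\frac{1}{t^2}\bigg\{\int_t^\infty\frac{s}{2}\,\frac{1+(u'(s))^2}{u(s)}\,e^{-\frac12\int_t^s z(1+(u'(z))^2)\,dz}\,ds\bigg\}dt+\sigma x$$ for all $x\in(d,\infty)$. *)

(* Defs.v *)
From Stdlib Require Import Reals.
From Coquelicot Require Import Coquelicot.
Open Scope R_scope.

Definition ode_rhs (n : nat) (u : R -> R) (x : R) : R :=
  ((x * Derive u x - u x) / 2 + (INR n - 1) / u x) * (1 + (Derive u x) ^ 2).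

Definition is_solution (n : nat) (d : R) (u : R -> R) : Prop :=
  forall x, d < x ->
    0 < u x /\ ex_derive u x /\ ex_derive (Derive u) x /\
    Derive (Derive u) x = ode_rhs n u x.

Definition weight (u : R -> R) (t s : R) : R :=
  exp (- / 2 * RInt (fun z => z * (1 + (Derive u z) ^ 2)) t s).

Definition inner_integrand (u : R -> R) (t s : R) : R :=
  s / 2 * ((1 + (Derive u s) ^ 2) / u s) * weight u t s.

Definition inner (u : R -> R) (t : R) : R :=
  RInt_gen (inner_integrand u t) (at_point t) (Rbar_locally p_infty).

(* Main.v *)
Require Import Defs.
From Stdlib Require Import Reals Lra Classical.
From Coquelicot Require Import Coquelicot.
Open Scope R_scope.

Lemma mvt_ge (g dg : R -> R) (t S m : R) : t <= S ->
  (forall y, t <= y <= S -> is_derive g y (dg y)) ->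
  (forall y, t <= y <= S -> m <= dg y) -> m * (S - t) <= g S - g t.
Proof.
  intros hts hd hm.
  destruct (MVT_gen g t S dg) as [c0 [hc heq]].
  - intros y hy. rewrite Rmin_left in hy by lra. rewrite Rmax_right in hy by lra.
    apply hd; lra.
  - intros y hy. rewrite Rmin_left in hy by lra. rewrite Rmax_right in hy by lra.
    apply continuity_pt_filterlim. apply (ex_derive_continuous (K:=R_AbsRing) (V:=R_NormedModule)). eexists; apply hd; lra.
  - rewrite Rmin_left in hc by lra. rewrite Rmax_right in hc by lra.
    rewrite heq. apply Rmult_le_compat_r; [lra|]. apply hm; lra.
Qed.

Lemma mvt_le (g dg : R -> R) (t S m : R) : t <= S ->
  (forall y, t <= y <= S -> is_derive g y (dg y)) ->
  (forall y, t <= y <= S -> dg y <= m) -> g S - g t <= m * (S - t).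
Proof.
  intros hts hd hm.
  assert (H := mvt_ge (fun y => - g y) (fun y => - dg y) t S (-m) hts).
  assert (-m * (S - t) <= - g S - - g t).
  { apply H. intros y hy. apply (is_derive_opp g). now apply hd.
    intros y hy. specialize (hm y hy). lra. }
  lra.
Qed.

Lemma gen_prim (g h P : R -> R) (d t L : R) : d < t ->
  (forall x, d < x -> g x = h x) ->
  (forall x, d < x -> is_derive P x (h x)) ->
  (forall x, d < x -> continuous h x) ->
  filterlim P (Rbar_locally p_infty) (locally L) ->
  is_RInt_gen g (at_point t) (Rbar_locally p_infty) (L - P t).
Proof.
  intros hdt hgh hP hc hlim Q [eps heps].
  apply filterlim_locally with (eps := eps) in hlim.
  destruct hlim as [M hM].
  apply Filter_prod with (Q := fun a => a = t) (R := fun b => Rmax M t < b).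
  - reflexivity.
  - exists (Rmax M t). auto.
  - intros a b -> hb. simpl.
    assert (hMb : M < b) by (eapply Rle_lt_trans; [apply Rmax_l|exact hb]).
    assert (htb : t < b) by (eapply Rle_lt_trans; [apply Rmax_r|exact hb]).
    exists (P b - P t). split.
    + apply is_RInt_ext with h.
      { intros x hx. rewrite Rmin_left in hx by lra. rewrite Rmax_right in hx by lra.
        symmetry; apply hgh; lra. }
      apply (is_RInt_derive P h).
      { intros x hx. rewrite Rmin_left in hx by lra. rewrite Rmax_right in hx by lra.
        apply hP; lra. }
      { intros x hx. rewrite Rmin_left in hx by lra. rewrite Rmax_right in hx by lra.
        apply hc; lra. }
    + apply heps. specialize (hM b hMb).
      revert hM. unfold ball; simpl; unfold AbsRing_ball, abs, minus, plus, opp; simpl.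
      intros hh. replace (P b - P t + - (L - P t)) with (P b + - L) by ring. exact hh.
Qed.

Lemma dW (u u1 F : R->R) y du du1 dF: is_derive u y du -> is_derive u1 y du1 -> is_derive F y dF ->
  is_derive (fun y => (y*u1 y - u y)*exp(-/2*F y)) y
   ((y*du1 + u1 y - du)*exp(-/2*F y) + (y*u1 y - u y)*(exp(-/2*F y)*(-/2*dF))).
Proof.
  intros h1 h2 h3.
  auto_derive.
  - repeat split; eexists; eauto.
  - replace (Derive (fun x : R => u x) y) with du by (symmetry; apply is_derive_unique; exact h1).
    replace (Derive (fun x : R => u1 x) y) with du1 by (symmetry; apply is_derive_unique; exact h2).
    replace (Derive (fun x : R => F x) y) with dF by (symmetry; apply is_derive_unique; exact h3). ring.
Qed.

Lemma cont1 (u u1 F : R->R) y t: ex_derive u y -> ex_derive u1 y -> ex_derive F y -> u y <> 0 ->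
  continuous (fun s => s/2*((1+u1 s^2)/u s)*(exp(-/2*F s)/exp(-/2*F t))) y.
Proof.
  intros h1 h2 h3 h4. apply (ex_derive_continuous (K:=R_AbsRing) (V:=R_NormedModule)).
  auto_derive. repeat split; auto.
Qed.

Lemma cont2 (u u1 : R->R) y c: ex_derive u y -> ex_derive u1 y -> y <> 0 ->
  continuous (fun t => /t^2 * (-(t*u1 t - u t)/(2*c))) y.
Proof.
  intros h1 h2 h4. apply (ex_derive_continuous (K:=R_AbsRing) (V:=R_NormedModule)).
  auto_derive. repeat split; auto.
Qed.

Lemma cont3 (u1 : R->R) y: ex_derive u1 y ->
  continuous (fun z => z*(1+u1 z^2)) y.
Proof.
  intros h2. apply (ex_derive_continuous (K:=R_AbsRing) (V:=R_NormedModule)).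
  auto_derive. auto.
Qed.

Lemma dq (u : R->R) y du c: is_derive u y du -> y <> 0 -> c <> 0 ->
  is_derive (fun t => -(u t / t)/(2*c)) y (-((y*du - u y)/y^2)/(2*c)).
Proof.
  intros h1 h4 h5. auto_derive. split; [eexists; eauto|auto].
  replace (Derive (fun x : R => u x) y) with du by (symmetry; apply is_derive_unique; exact h1). field. auto.
Qed.

Lemma datan (u1 : R->R) y du1 : is_derive u1 y du1 ->
  is_derive (fun t => atan (u1 t)) y (du1 / (1 + u1 y ^2)).
Proof.
  intros h. assert (H := is_derive_comp atan u1 y (/(1 + u1 y ^2)) du1).
  unfold scal in H; simpl in H; unfold mult in H; simpl in H.
  unfold Rdiv. apply H; auto.
  apply is_derive_Reals. apply derivable_pt_lim_atan.
Qed.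

Lemma dG (F : R->R) y dF : is_derive F y dF -> is_derive (fun y => F y - y^2/2) y (dF - y).
Proof.
  intros h3. auto_derive. eexists; eauto.
  replace (Derive (fun x : R => F x) y) with dF by (symmetry; apply is_derive_unique; exact h3). field.
Qed.

Lemma dq0 (u : R->R) y du: is_derive u y du -> y <> 0 ->
  is_derive (fun t => u t / t) y ((y*du - u y)/y^2).
Proof.
  intros h1 h4. auto_derive. split; [eexists; eauto|auto].
  replace (Derive (fun x : R => u x) y) with du by (symmetry; apply is_derive_unique; exact h1). field. auto.
Qed.

Lemma dscale (f : R->R) y l k : is_derive f y l -> is_derive (fun x => f x * k) y (l * k).
Proof.
  intros h1. auto_derive. eexists; eauto.
  replace (Derive (fun x : R => f x) y) with l by (symmetry; apply is_derive_unique; exact h1). ring.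
Qed.

Lemma lim_scale (f : R -> R) l k : filterlim f (Rbar_locally p_infty) (locally l) ->
  filterlim (fun x => f x * k) (Rbar_locally p_infty) (locally (l * k)).
Proof.
  intros h. eapply filterlim_comp with (g := fun z => z * k). exact h.
  apply (ex_derive_continuous (K:=R_AbsRing) (V:=R_NormedModule) (fun z => z * k)).
  auto_derive. auto.
Qed.

Lemma core (u u1 u2 F : R->R) (c d : R) (hc : 0 < c) (hd : 0 <= d)
 (hpos : forall y, d<y -> 0 < u y)
 (hdu : forall y, d<y -> is_derive u y (u1 y))
 (hdu1 : forall y, d<y -> is_derive u1 y (u2 y))
 (hode : forall y, d<y -> u2 y = ((y*u1 y - u y)/2 + c/u y)*(1+u1 y^2))
 (hF : forall y, d<y -> is_derive F y (y*(1+u1 y^2)))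
 (hFa : F (d+1) = 0) :
 exists sigma, 0 <= sigma /\ forall x, d < x ->
  (forall t, d < t -> forall g, (forall s, d<s -> g s = s/2*((1+u1 s^2)/u s)*(exp(-/2*F s)/exp(-/2*F t))) ->
     is_RInt_gen g (at_point t) (Rbar_locally p_infty) (-(t*u1 t - u t)/(2*c))) /\
  (forall g, (forall t, d<t -> g t = /t^2 * (-(t*u1 t - u t)/(2*c))) ->
     exists I, is_RInt_gen g (at_point x) (Rbar_locally p_infty) I /\ u x = 2*c*x*I + sigma*x).
Proof.
  pose (a := d+1).
  pose (E := fun y => exp(-/2*F y)).
  pose (v := fun y => y*u1 y - u y).
  pose (W := fun y => v y * E y).
  pose (k := fun s => s/2*((1+u1 s^2)/u s)).
  assert (Epos : forall y, 0 < E y) by (intros; apply exp_pos).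
  assert (dW' : forall y, d<y -> is_derive W y (2*c*k y*E y)).
  { intros y hy.
    assert (H := dW u u1 F y (u1 y) (u2 y) (y*(1+u1 y^2)) (hdu y hy) (hdu1 y hy) (hF y hy)).
    assert (hu := hpos y hy).
    replace (2*c*k y*E y) with ((y * u2 y + u1 y - u1 y) * exp (- / 2 * F y) +
      (y * u1 y - u y) * (exp (- / 2 * F y) * (- / 2 * (y * (1 + u1 y ^ 2))))).
    exact H.
    rewrite hode by exact hy. unfold k, E. field. lra. }
  assert (kpos : forall y, d<y -> 0 <= 2*c*k y*E y).
  { intros y hy. unfold k. assert (hu := hpos y hy). specialize (Epos y).
    assert (0 <= u1 y ^2) by (apply pow2_ge_0).
    assert (0 < (1 + u1 y^2)/u y) by (apply Rdiv_lt_0_compat; lra).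
    assert (0 <= y/2) by lra.
    assert (0 <= y / 2 * ((1 + u1 y ^ 2) / u y)) by (apply Rmult_le_pos; lra).
    apply Rmult_le_pos; [|lra]. apply Rmult_le_pos; lra. }
  assert (Wmono : forall t S, d<t -> t<=S -> W t <= W S).
  { intros t S ht hts. assert (H := mvt_ge W (fun y => 2*c*k y*E y) t S 0 hts).
    assert (0 * (S - t) <= W S - W t); [|lra].
    apply H; intros y hy; [apply dW'|apply kpos]; lra. }
  assert (Fnn : forall y, a <= y -> 0 <= F y).
  { intros y hy. assert (H := mvt_ge F (fun y => y*(1+u1 y^2)) a y 0 hy).
    fold a in hFa. assert (0 * (y - a) <= F y - F a); [|lra].
    apply H; intros z hz. apply hF; unfold a in *; lra.
    assert (0 <= u1 z ^2) by (apply pow2_ge_0). apply Rmult_le_pos; unfold a in *; lra. }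
  assert (Flb : forall y, a <= y -> (y^2 - a^2)/2 <= F y).
  { intros y hy. assert (H := mvt_ge (fun y => F y - y^2/2) (fun y => y*(1+u1 y^2) - y) a y 0 hy).
    fold a in hFa. assert (0 * (y - a) <= (F y - y^2/2) - (F a - a^2/2)); [|lra].
    apply H; intros z hz. apply dG, hF; unfold a in *; lra.
    assert (0 <= u1 z ^2) by (apply pow2_ge_0).
    assert (0 <= z * u1 z ^2) by (apply Rmult_le_pos; unfold a in *; lra). nra. }
  assert (Einv : forall y, E y * exp(/2*F y) = 1).
  { intros y. unfold E. rewrite <- exp_plus. replace (- / 2 * F y + / 2 * F y) with 0 by ring. apply exp_0. }
  assert (vW : forall y, v y = W y * exp(/2*F y)).
  { intros y. unfold W. rewrite Rmult_assoc, Einv. ring. }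
  assert (Xge : forall y, a <= y -> 1 + F y / 2 <= exp(/2*F y)).
  { intros y hy. replace (F y / 2) with (/2 * F y) by field. apply exp_ineq1_le. }
  assert (Wle0 : forall S, d<S -> W S <= 0).
  { intros S hS. destruct (Rle_or_lt (W S) 0) as [h|h]; [exact h|exfalso].
    pose (y1 := Rmax S a). pose (cc := W S).
    assert (hy1S : S <= y1) by apply Rmax_l. assert (hy1a : a <= y1) by apply Rmax_r.
    assert (vge : forall y, y1 <= y -> cc <= v y).
    { intros y hy. assert (h1 := Wmono S y hS ltac:(lra)). fold cc in h1.
      rewrite vW. assert (h2 := Xge y ltac:(lra)). assert (h3 := Fnn y ltac:(lra)).
      fold cc in h. apply Rle_trans with (W y); [lra|].
      rewrite <- (Rmult_1_r (W y)) at 1. apply Rmult_le_compat_l; lra. }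
    assert (hPI := PI_RGT_0). assert (hcc : 0 < cc) by exact h.
    pose (T := 2*PI/cc).
    assert (hT : 0 <= T) by (unfold T; apply Rlt_le, Rdiv_lt_0_compat; lra).
    assert (H := mvt_ge (fun t => atan (u1 t)) (fun t => u2 t / (1 + u1 t^2)) y1 (y1+T) (cc/2) ltac:(lra)).
    assert (cc/2 * (y1 + T - y1) <= atan (u1 (y1+T)) - atan (u1 y1)).
    { apply H; intros y hy.
      - apply datan, hdu1. unfold a in *; lra.
      - assert (hyd : d < y) by (unfold a in *; lra).
        rewrite hode by exact hyd. assert (hu := hpos y hyd).
        assert (hv := vge y ltac:(lra)). unfold v in hv.
        assert (0 <= u1 y ^2) by (apply pow2_ge_0).
        replace (((y * u1 y - u y) / 2 + c / u y) * (1 + u1 y ^ 2) / (1 + u1 y ^ 2))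
          with ((y * u1 y - u y) / 2 + c / u y) by (field; lra).
        assert (0 < c / u y) by (apply Rdiv_lt_0_compat; lra). lra. }
    replace (cc / 2 * (y1 + T - y1)) with PI in H0 by (unfold T; field; lra).
    destruct (atan_bound (u1 (y1+T))). destruct (atan_bound (u1 y1)). lra. }
  assert (hq : forall y, d < y -> is_derive (fun t => u t / t) y (v y / y^2)).
  { intros y hy. apply dq0. apply hdu, hy. unfold a in *; lra. }
  assert (approx : forall eps, 0 < eps -> exists y, d < y /\ -eps < W y).
  { intros eps heps. apply NNPP. intros hn.
    assert (hall : forall y, d < y -> W y <= -eps).
    { intros y hy. destruct (Rle_or_lt (W y) (-eps)) as [h|h]; auto. exfalso; apply hn; eauto. }
    pose (y0 := 2*a).
    assert (hy0 : d < y0) by (unfold y0, a; lra).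
    assert (hslope : forall y, y0 <= y -> v y / y^2 <= -eps/8).
    { intros y hy. assert (hya : a <= y) by (unfold y0, a in *; lra).
      assert (h1 := Flb y hya). assert (h2 := Xge y hya). assert (h3 := hall y ltac:(lra)).
      rewrite vW.
      assert (hX : y^2/8 <= exp (/2 * F y)).
      { assert (ha0 : 0 < a) by (unfold a; lra). assert (h2a : 2*a <= y) by (unfold y0 in hy; lra).
        assert (2*a*(2*a) <= y*y) by (apply Rmult_le_compat; lra).
        replace (y^2) with (y*y) in * by ring. replace (a^2) with (a*a) in * by ring. nra. }
      assert (0 < y^2) by (apply pow_lt; unfold a, y0 in *; lra).
      apply Rmult_le_reg_r with (y^2); [lra|].
      replace (W y * exp (/ 2 * F y) / y ^ 2 * y ^ 2) with (W y * exp (/ 2 * F y)) by (field; lra).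
      assert (W y * exp (/ 2 * F y) <= -eps * exp (/2 * F y)).
      { apply Rmult_le_compat_r; [apply Rlt_le, exp_pos|lra]. }
      nra. }
    pose (q0 := u y0 / y0).
    assert (hq0 : 0 < q0) by (apply Rdiv_lt_0_compat; [apply hpos; lra| unfold y0,a; lra]).
    pose (T := 8*q0/eps + 1).
    assert (hT : 0 <= T) by (unfold T; assert (0 < 8*q0/eps) by (apply Rdiv_lt_0_compat; lra); lra).
    assert (H := mvt_le (fun t => u t / t) (fun y => v y / y^2) y0 (y0+T) (-eps/8) ltac:(lra)).
    assert (u (y0+T)/(y0+T) - u y0 / y0 <= -eps/8 * (y0+T-y0)).
    { apply H; intros y hy. apply hq; lra. apply hslope; lra. }
    assert (0 < u (y0+T)/(y0+T)) by (apply Rdiv_lt_0_compat; [apply hpos; lra| lra]).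
    fold q0 in H0. replace (-eps/8 * (y0+T-y0)) with (-q0 - eps/8) in H0 by (unfold T; field; lra).
    lra. }
  assert (Wlim : filterlim W (Rbar_locally p_infty) (locally 0)).
  { apply filterlim_locally. intros [eps heps]. simpl.
    destruct (approx eps heps) as [y [hy hW]]. exists y. intros x hx.
    unfold ball; simpl; unfold AbsRing_ball, abs, minus, plus, opp; simpl.
    assert (h1 := Wmono y x hy ltac:(lra)). assert (h2 := Wle0 x ltac:(lra)).
    rewrite Rabs_left1; lra. }
  assert (inner_ok : forall t, d < t -> forall g, (forall s, d<s -> g s = s/2*((1+u1 s^2)/u s)*(exp(-/2*F s)/exp(-/2*F t))) ->
     is_RInt_gen g (at_point t) (Rbar_locally p_infty) (-(t*u1 t - u t)/(2*c))).
  { intros t ht g hg.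
    assert (hEt : E t <> 0) by (apply Rgt_not_eq, Epos). assert (hc' : c <> 0) by lra.
    replace (-(t*u1 t - u t)/(2*c)) with (0 * /(2*c*E t) - W t * /(2*c*E t))
      by (unfold W, v; field; repeat split; auto).
    apply gen_prim with (h := fun s => s/2*((1+u1 s^2)/u s)*(exp(-/2*F s)/exp(-/2*F t))) (d := d)
      (P := fun s => W s * /(2*c*E t)); auto.
    - intros x hx. replace (x / 2 * ((1 + u1 x ^ 2) / u x) * (exp (- / 2 * F x) / exp (- / 2 * F t)))
        with (2*c*k x*E x * / (2*c*E t)) by (unfold k; unfold E in *; assert (u x <> 0) by (apply Rgt_not_eq, hpos, hx); field; repeat split; auto).
      apply dscale, dW', hx.
    - intros x hx. apply cont1. eexists; apply hdu, hx. eexists; apply hdu1, hx. eexists; apply hF, hx.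
      apply Rgt_not_eq, hpos, hx.
    - apply lim_scale, Wlim. }
  assert (qdec : forall x y, d < x -> x <= y -> u y / y <= u x / x).
  { intros x y hx hxy. assert (H := mvt_le (fun t => u t / t) (fun y => v y / y^2) x y 0 hxy).
    assert (u y / y - u x / x <= 0 * (y - x)); [|lra].
    apply H; intros z hz. apply hq; lra.
    assert (hW := Wle0 z ltac:(lra)). rewrite vW.
    assert (0 < exp (/2 * F z)) by apply exp_pos.
    assert (0 < z^2) by (apply pow_lt; lra).
    unfold Rdiv. apply Rmult_le_0_r. nra. apply Rlt_le, Rinv_0_lt_compat; lra. }
  pose (Eset := fun z => exists y, d < y /\ z = - (u y / y)).
  assert (hb : bound Eset).
  { exists 0. intros z [y [hy ->]]. assert (0 < u y / y) by (apply Rdiv_lt_0_compat; [apply hpos|]; lra). lra. }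
  assert (hne : exists z, Eset z) by (exists (- (u a / a)); exists a; split; [unfold a; lra|reflexivity]).
  destruct (completeness Eset hb hne) as [m [hm1 hm2]].
  assert (hm0 : m <= 0).
  { apply hm2. intros z [y [hy ->]]. assert (0 < u y / y) by (apply Rdiv_lt_0_compat; [apply hpos|]; lra). lra. }
  exists (-m). split; [lra|].
  assert (slb : forall y, d < y -> -m <= u y / y).
  { intros y hy. assert (Eset (-(u y / y))) by (exists y; auto). specialize (hm1 _ H). lra. }
  assert (qlim : filterlim (fun t => u t / t) (Rbar_locally p_infty) (locally (-m))).
  { apply filterlim_locally. intros [eps heps]. simpl.
    assert (hex : exists y, d < y /\ u y / y < -m + eps).
    { apply NNPP. intros hn. assert (m <= m - eps); [|lra].
      apply hm2. intros z [y [hy ->]]. destruct (Rlt_or_le (u y / y) (-m+eps)) as [h|h].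
      exfalso; apply hn; eauto. lra. }
    destruct hex as [y [hy hyq]]. exists y. intros x hx.
    unfold ball; simpl; unfold AbsRing_ball, abs, minus, plus, opp; simpl.
    assert (h1 := qdec y x hy ltac:(lra)). assert (h2 := slb x ltac:(lra)).
    rewrite Rabs_right; lra. }
  intros x hx. split; [exact inner_ok|].
  intros g hg.
  assert (hc' : c <> 0) by lra. assert (hx0 : x <> 0) by lra.
  exists ((-m) * (-/(2*c)) - (u x / x) * (-/(2*c))). split.
  - apply gen_prim with (h := fun t => /t^2 * (-(t*u1 t - u t)/(2*c))) (d := d)
      (P := fun t => u t / t * (-/(2*c))); auto.
    + intros y hy. replace (/ y ^ 2 * (- (y * u1 y - u y) / (2 * c))) with (v y / y^2 * (-/(2*c)))
        by (unfold v; field; split; auto; lra).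
      apply dscale, hq, hy.
    + intros y hy. apply cont2. eexists; apply hdu, hy. eexists; apply hdu1, hy. lra.
    + apply lim_scale, qlim.
  - field. auto.
Qed.
Lemma ex_RInt_f (u : R -> R) (d : R) (hex : forall y, d < y -> ex_derive (Derive u) y) (a b : R) :
  d < a -> d < b -> ex_RInt (fun z => z * (1 + (Derive u z) ^ 2)) a b.
Proof.
  intros ha hb. apply (ex_RInt_continuous (V:=R_CompleteNormedModule)). intros z hz.
  apply cont3. apply hex.
  destruct (Rle_dec a b) as [h|h].
  - rewrite Rmin_left in hz by lra. lra.
  - rewrite Rmin_right in hz by lra. lra.
Qed.

Theorem lemma2 (n : nat) (d : R) (u : R -> R)
  (hn : (2 <= n)%nat) (hd : 0 <= d) (hu : is_solution n d u) :
  exists sigma : R, 0 <= sigma /\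
    forall x, d < x ->
      (forall t, x <= t ->
         ex_RInt_gen (inner_integrand u t) (at_point t) (Rbar_locally p_infty)) /\
      exists I : R,
        is_RInt_gen (fun t => / t ^ 2 * inner u t) (at_point x)
          (Rbar_locally p_infty) I /\
        u x = 2 * (INR n - 1) * x * I + sigma * x.
Proof.
  pose (f := fun z => z * (1 + (Derive u z) ^ 2)).
  pose (F := fun y => RInt f (d+1) y).
  assert (hc : 0 < INR n - 1).
  { apply le_INR in hn. simpl in hn. lra. }
  assert (hex2 : forall y, d < y -> ex_derive (Derive u) y) by (intros y hy; apply hu, hy).
  assert (hexf := ex_RInt_f u d hex2).
  destruct (core u (Derive u) (Derive (Derive u)) F (INR n - 1) d hc hd) as [sigma [hs H]].
  - intros y hy. apply hu, hy.
  - intros y hy. apply Derive_correct, hu, hy.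
  - intros y hy. apply Derive_correct, hu, hy.
  - intros y hy. apply hu, hy.
  - intros y hy. apply (is_derive_RInt f F (d+1) y).
    + exists (mkposreal (y - d) ltac:(lra)). intros b hb.
      unfold ball in hb; simpl in hb; unfold AbsRing_ball, abs, minus, plus, opp in hb; simpl in hb.
      apply Rabs_lt_between in hb.
      apply (RInt_correct (V:=R_CompleteNormedModule)), hexf; lra.
    + apply cont3, hex2, hy.
  - unfold F. rewrite RInt_point. reflexivity.
  - exists sigma. split; [exact hs|]. intros x hx. destruct (H x hx) as [Hin Hout].
    assert (hinner : forall t, d < t ->
      is_RInt_gen (inner_integrand u t) (at_point t) (Rbar_locally p_infty)
        (- (t * Derive u t - u t) / (2 * (INR n - 1)))).
    { intros t ht. apply Hin; auto. intros s hs'.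
      unfold inner_integrand, weight. f_equal.
      replace (RInt (fun z : R => z * (1 + Derive u z ^ 2)) t s) with (F s - F t).
      + unfold Rdiv. rewrite <- exp_Ropp, <- exp_plus. f_equal. ring.
      + unfold F. change (RInt (fun z : R => z * (1 + Derive u z ^ 2)) t s) with (RInt f t s).
        rewrite <- (RInt_Chasles f (d+1) t s) by (apply hexf; lra).
        unfold plus; simpl. ring. }
    split.
    + intros t ht. eexists. apply hinner. lra.
    + apply Hout. intros t ht. f_equal. unfold inner.
      apply is_RInt_gen_unique. apply hinner, ht.
Qed.
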